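(* Let $p\geqslant 3$ be a prime and let $g\geqslant 2$ be an integer. (1) Neither the dihedral group $\mathbb{D}_{p^2}$ of order $2p^2$ nor the group $\mathbb{Z}_p^2\rtimes\mathbb{Z}_2=\langle a,b,c\mid a^p=b^p=c^2=1,\ cac=a^{-1},\ cbc=b^{-1},\ [a,b]=1\rangle$ acts triangularly on a compact Riemann surface of genus $g$. (2) If $\mathbb{Z}_{2p}\times\mathbb{Z}_p$ acts triangularly on a compact Riemann surface of genus $g$, then the signature of the action is $(2p,2p,p)$. (3) If $\mathbb{D}_p\times\mathbb{Z}_p$ acts triangularly on a compact Riemann surface of genus $g$, then the signature of the action is $(2p,2p,p)$ or $(2,p,2p)$. (4) If the cyclic group $\mathbb{Z}_{2p^2}$ acts triangularly on a compact Riemann surface of genus $g$, then the signature of the action is one of $(2,p^2,2p^2)$, $(2p^2,2p^2,p)$, $(2p^2,2p^2,p^2)$, $(2p,p^2,2p^2)$.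
   Context: All groups act faithfully by conformal automorphisms on compact Riemann surfaces. $\mathbb{Z}_n$ denotes the cyclic group of order $n$ and $\mathbb{D}_n$ the dihedral group of order $2n$. A finite group $G$ acting on a compact Riemann surface $S$ acts with signature $(h;m_1,\dots,m_r)$ if $S/G$ has genus $h$ and the branched regular covering $S\to S/G$ ramifies over exactly $r$ points, the points in the fibre over the $i$-th of which have $G$-stabiliser of order $m_i\ge 2$. The action is called triangular if $h=0$ and $r=3$; the signature is then written $(m_1,m_2,m_3)$ (up to the order of the $m_i$). Equivalently, $G$ acts with signature $(m_1,m_2,m_3)$ iff there is a surface-kernel epimorphism (ske) $\Phi:\Gamma\to G$, i.e. an epimorphism injective on each finite cyclic subgroup, from the triangle group $\Gamma=\langle x_1,x_2,x_3\mid x_1x_2x_3=x_1^{m_1}=x_2^{m_2}=x_3^{m_3}=1\rangle$, with $S\cong\mathbb{H}/\ker\Phi$. *)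

(* Defs.v *)
From mathcomp Require Import all_boot all_order all_algebra all_fingroup all_solvable.
Set Implicit Arguments. Unset Strict Implicit. Unset Printing Implicit Defensive.
Import GRing.Theory Num.Theory.

(* A finite group G acts with signature (0; m1, m2, m3) on a compact Riemann
   surface of genus g iff there is a surface-kernel epimorphism from the
   triangle group <x1,x2,x3 | x1 x2 x3 = x_i^{m_i} = 1> onto G, the genus
   being given by Riemann-Hurwitz.  A homomorphism from the triangle group is
   the same as a triple (y1,y2,y3) of G with y_i^{m_i} = 1 and y1 y2 y3 = 1;
   it is onto iff the y_i generate G; it is injective on finite cyclic
   subgroups (all conjugate into some <x_i>) iff #[y_i] = m_i. *)
Definition triangular_sig (gT : finGroupType) (G : {group gT}) (g m1 m2 m3 : nat) : Prop :=
  [/\ 2 <= m1, 2 <= m2 & 2 <= m3] /\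
  exists y1 y2 y3 : gT,
    [/\ [/\ y1 \in G, y2 \in G & y3 \in G],
        <<[set y1; y2; y3]>>%g = G :> {set gT},
        (y1 * y2 * y3 = 1)%g &
        [/\ #[y1]%g = m1, #[y2]%g = m2, #[y3]%g = m3 &
        ((2 * g)%:R - 2 = #|G|%:R * (1 - m1%:R^-1 - m2%:R^-1 - m3%:R^-1) :> rat)%R]].

Definition acts_triangularly (gT : finGroupType) (G : {group gT}) (g : nat) : Prop :=
  exists m1 m2 m3, triangular_sig G g m1 m2 m3.

(* Main.v *)
Require Import Defs.
From mathcomp Require Import all_boot all_order all_algebra all_fingroup all_solvable.
From mathcomp Require Import zify ring lra.
Set Implicit Arguments. Unset Strict Implicit. Unset Printing Implicit Defensive.
Import GRing.Theory Num.Theory.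

Lemma odd_p p : prime p -> 3 <= p -> odd p.
Proof. by move=> hp hp3; case: (even_prime hp) => // e; rewrite e in hp3. Qed.

Lemma divs2p2 p d : prime p -> d %| 2 * p ^ 2 ->
  d = 1 \/ d = 2 \/ d = p \/ d = 2 * p \/ d = p ^ 2 \/ d = 2 * p ^ 2.
Proof.
move=> hp hd.
have pf : forall t, t %| p ^ 2 -> [\/ t = 1, t = p | t = p ^ 2].
  move=> t /(dvdn_pfactor _ _ hp)[[|[|[|//]]]] _ ->; rewrite ?expn0 ?expn1;
    by [constructor 1 | constructor 2 | constructor 3].
case od : (odd d).
  have : d %| p ^ 2 * 2 by rewrite mulnC.
  rewrite Gauss_dvdl; last by rewrite coprimen2 od.
  by case/pf => ->; [left | right; right; left | right; right; right; right; left].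
have /dvdnP[t ht] : 2 %| d by rewrite dvdn2 od.
move: hd; rewrite ht mulnC dvdn_pmul2l // => /pf[] ->; rewrite ?muln1;
  by [right; left | right; right; right; left | right; right; right; right; right].
Qed.

Lemma cls p o (e q : bool) : prime p -> 3 <= p -> 2 <= o -> o %| 2 * p ^ 2 ->
  (o %| p ^ 2) = ~~ e -> (o %| 2 * p) = q ->
  if e then (o = 2 * p ^ 2 /\ q = false) \/ ((o = 2 \/ o = 2 * p) /\ q = true)
  else (o = p ^ 2 /\ q = false) \/ (o = p /\ q = true).
Proof.
move=> hp hp3 ho hd hA hB.
have op := odd_p hp hp3.
have p0 : 0 < p by apply: prime_gt0.
have f1 : (2 %| p ^ 2) = false by rewrite dvdn2 oddX op orbT.
have f3 : (2 * p %| p ^ 2) = false.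
  by apply/negP => h; move: f1; rewrite (dvdn_trans (dvdn_mulr p (dvdnn 2)) h).
have f5 : (2 * p ^ 2 %| p ^ 2) = false.
  by apply/negP => h; move: f1; rewrite (dvdn_trans (dvdn_mulr _ (dvdnn 2)) h).
have g4 : (p ^ 2 %| 2 * p) = false.
  apply/negP; rewrite expnS expn1 dvdn_pmul2r // => h.
  by have := dvdn_leq (isT : 0 < 2) h; rewrite leqNgt hp3.
have g5 : (2 * p ^ 2 %| 2 * p) = false.
  apply/negP; rewrite dvdn_pmul2l // => h.
  by rewrite (dvdn_trans h (dvdn_mull 2 (dvdnn p))) in g4.
have f2 : (p %| p ^ 2) = true by rewrite dvdn_exp.
have g2 : (p %| 2 * p) = true by rewrite dvdn_mull.
case: (divs2p2 hp hd) => [|[|[|[|[|]]]]] ho'; subst o.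
- by [].
- by move: hA hB; rewrite f1 dvdn_mulr // => /esym/negbFE -> <- /=; right; split=> //; left.
- by move: hA hB; rewrite f2 g2 => /esym/negbTE -> <- /=; right; split.
- by move: hA hB; rewrite f3 dvdnn => /esym/negbFE -> <- /=; right; split=> //; right.
- by move: hA hB; rewrite dvdnn g4 => /esym/negbTE -> <- /=; left; split.
- by move: hA hB; rewrite f5 g5 => /esym/negbFE -> <- /=; left; split.
Qed.

Lemma core4 p o1 o2 o3 (q1 q2 q3 : bool) :
  (o1 = 2 * p ^ 2 /\ q1 = false) \/ ((o1 = 2 \/ o1 = 2 * p) /\ q1 = true) ->
  (o2 = 2 * p ^ 2 /\ q2 = false) \/ ((o2 = 2 \/ o2 = 2 * p) /\ q2 = true) ->
  (o3 = p ^ 2 /\ q3 = false) \/ (o3 = p /\ q3 = true) ->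
  ~~ (q1 && q2) -> ~~ (q1 && q3) -> ~~ (q2 && q3) ->
  [\/ perm_eq [:: o1; o2; o3] [:: 2; p ^ 2; 2 * p ^ 2],
      perm_eq [:: o1; o2; o3] [:: 2 * p ^ 2; 2 * p ^ 2; p],
      perm_eq [:: o1; o2; o3] [:: 2 * p ^ 2; 2 * p ^ 2; p ^ 2] |
      perm_eq [:: o1; o2; o3] [:: 2 * p; p ^ 2; 2 * p ^ 2]].
Proof.
case=> [[-> ->]|[[->|->] ->]]; case=> [[-> ->]|[[->|->] ->]]; case=> [[-> ->]|[-> ->]] //= _ _ _;
  first [ by constructor 1; apply/seq.permP => P /=; lia
        | by constructor 2; apply/seq.permP => P /=; lia
        | by constructor 3; apply/seq.permP => P /=; lia
        | by constructor 4; apply/seq.permP => P /=; lia ].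
Qed.

Lemma perm132 (a b c : nat) : perm_eq [:: a; b; c] [:: a; c; b].
Proof. by apply/seq.permP => P /=; lia. Qed.

Lemma perm231 (a b c : nat) : perm_eq [:: a; b; c] [:: b; c; a].
Proof. by apply/seq.permP => P /=; lia. Qed.

Lemma N_eq p : 2 * p ^ 2 = p * (2 * p).
Proof. by rewrite expnS expn1 mulnCA. Qed.

Local Open Scope group_scope.

Lemma z2par (u v w : 'I_2) : u * v * w = 1 -> ~~ [&& u == 1, v == 1 & w == 1] ->
  [\/ [/\ u == 1, v != 1 & w != 1], [/\ u != 1, v == 1 & w != 1] | [/\ u != 1, v != 1 & w == 1]].
Proof.
case: u => [[|[|//]]] ?; case: v => [[|[|//]]] ?; case: w => [[|[|//]]] ? /=.
all: move/eqP; rewrite /eq_op /=.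
all: move=> E N //; by [constructor 1 | constructor 2 | constructor 3].
Qed.

Lemma genus_contra (g n m1 m2 m3 : nat) : 2 <= g ->
  [\/ m1 = 2 /\ m2 = 2, m1 = 2 /\ m3 = 2 | m2 = 2 /\ m3 = 2] ->
  ((2 * g)%:R - 2 = n%:R * (1 - m1%:R^-1 - m2%:R^-1 - m3%:R^-1) :> rat)%R -> False.
Proof.
move=> hg H E.
have hg' : (4 <= (2 * g)%:R :> rat)%R by rewrite (ler_nat rat 4); lia.
have hn : (0 <= n%:R :> rat)%R by apply: ler0n.
have hm : forall m : nat, (0 <= m%:R^-1 :> rat)%R by move=> m; rewrite invr_ge0 ler0n.
have h2 : (2%:R^-1 + 2%:R^-1 = 1 :> rat)%R by [].
case: H => [][??]; subst.
- have := hm m3. nra.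
- have := hm m2. nra.
- have := hm m1. nra.
Qed.

Lemma triv_coprime (gT : finGroupType) (u : gT) m n :
  u ^+ m = 1 -> u ^+ n = 1 -> coprime m n -> u = 1.
Proof.
move=> hm hn cop; apply/eqP; rewrite -order_eq1 -dvdn1 -(eqP cop) dvdn_gcd.
by rewrite !order_dvdn hm hn eqxx.
Qed.

Lemma sub3 (gT : finGroupType) (G : {group gT}) y1 y2 y3 :
  y1 \in G -> y2 \in G -> y3 \in G -> [set y1; y2; y3] \subset G.
Proof. by move=> h1 h2 h3; apply/subsetP=> x; rewrite !inE => /orP[/orP[]|]/eqP->. Qed.

Lemma morph_gen_triv (gT rT : finGroupType) (G : {group gT}) (f : {morphism G >-> rT}) y1 y2 y3 :
  y1 \in G -> y2 \in G -> y3 \in G -> <<[set y1; y2; y3]>> = G ->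
  f y1 = 1 -> f y2 = 1 -> f y3 = 1 -> f @* G = 1.
Proof.
move=> h1 h2 h3 hG f1 f2 f3.
suff: f @* <<[set y1; y2; y3]>> \subset [1] by rewrite hG => /trivgP.
rewrite morphim_gen ?sub3 // gen_subG.
apply/subsetP => x /morphimP[y yG yS ->]; move: yS.
rewrite !inE => /orP[/orP[]|]/eqP->; by rewrite ?f1 ?f2 ?f3.
Qed.

Lemma cardT2 : #|[set: 'I_2]| = 2.
Proof. by rewrite cardsT card_ord. Qed.

Lemma z2_three (gT : finGroupType) (G : {group gT}) (f : {morphism G >-> 'I_2}) y1 y2 y3 :
  f @* G = setT -> y1 \in G -> y2 \in G -> y3 \in G -> <<[set y1; y2; y3]>> = G ->
  y1 * y2 * y3 = 1 ->
  [\/ [/\ f y1 == 1, f y2 != 1 & f y3 != 1], [/\ f y1 != 1, f y2 == 1 & f y3 != 1]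
    | [/\ f y1 != 1, f y2 != 1 & f y3 == 1]].
Proof.
move=> hf h1 h2 h3 hG hp; apply: z2par.
  by rewrite -!morphM ?groupM // hp morph1.
apply/negP => /and3P[/eqP e1 /eqP e2 /eqP e3].
have := morph_gen_triv h1 h2 h3 hG e1 e2 e3; rewrite hf => e.
by move: (congr1 (fun A : {set 'I_2} => #|A|) e); rewrite /= cardT2 cards1.
Qed.

Lemma ord2 (gT : finGroupType) (y : gT) : y ^+ 2 = 1 -> 2 <= #[y] -> #[y] = 2.
Proof.
by move=> h hm; apply/eqP; rewrite eqn_leq hm dvdn_leq // order_dvdn h.
Qed.

Lemma no_tri (gT : finGroupType) (G : {group gT}) (f : {morphism G >-> 'I_2}) g :
  2 <= g -> f @* G = setT -> (forall x, x \in G -> f x != 1 -> x ^+ 2 = 1) ->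
  ~ acts_triangularly G g.
Proof.
move=> hg hf hinv [m1 [m2 [m3 [[hm1 hm2 hm3] [y1 [y2 [y3 [[h1 h2 h3] hgen hprod [o1 o2 o3 E]]]]]]]]].
apply: (genus_contra hg _ E).
have hG : <<[set y1; y2; y3]>> = G by [].
have o2' : forall y m, y \in G -> f y != 1 -> #[y] = m -> 2 <= m -> m = 2.
  by move=> y m hy ny <- hm; apply: ord2 (hinv _ hy ny) hm.
case: (z2_three hf h1 h2 h3 hG hprod) => [][n1 n2 n3].
- by constructor 3; split; [apply: (o2' y2) | apply: (o2' y3)].
- by constructor 2; split; [apply: (o2' y1) | apply: (o2' y3)].
- by constructor 1; split; [apply: (o2' y1) | apply: (o2' y2)].
Qed.

Lemma Z2_homG_aux (gT : finGroupType) (G : {group gT}) (f : {morphism G >-> 'I_2}) x :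
  x \in G -> f x ^+ 2 = 1.
Proof.
move=> xG; have := expg_cardG (in_setT (f x)); rewrite cardT2.
by [].
Qed.



Lemma part1a (p g : nat) (gT : finGroupType) (G : {group gT}) :
  prime p -> 3 <= p -> 2 <= g ->
  (G \isog Grp (a : b : (a ^+ (p ^ 2), b ^+ 2, a ^ b = a^-1)))%g -> ~ acts_triangularly G g.
Proof.
move=> hp hp3 hg iso.
have : [set: 'I_2] \homg G.
  rewrite iso; apply/existsP; exists (1, Zp1); rewrite /= !xpair_eqE /=.
  rewrite cycle1 joing1G expg1n conj1g invg1 !eqxx !andbT.
  by rewrite eqEcard subsetT cardsT card_ord -orderE order_Zp1 leqnn.
case/homgP => f hf.
move: (isoGrp_hom iso) => /existsP[[a b]] /=; rewrite !xpair_eqE /=.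
case/and4P => /eqP hG /eqP ha /eqP hb /eqP hab.
have aG : a \in G by rewrite -hG (subsetP (joing_subl _ _)) ?cycle_id.
have bG : b \in G by rewrite -hG (subsetP (joing_subr _ _)) ?cycle_id.
have fa : f a = 1.
  apply: (triv_coprime (m := p ^ 2) (n := 2)); first by rewrite -morphX // ha morph1.
    exact: Z2_homG_aux.
  by rewrite coprimeXl // coprimen2 odd_p.
have hn : <[b]> \subset 'N(<[a]>) by rewrite cycle_subG inE -cycleJ hab cycleV subxx.
have hGp : G = <[a]> * <[b]> :> {set gT} by rewrite -hG norm_joinEr.
have binv : b^-1 = b by apply/eqP; rewrite eq_invg_mul -expg2 hb.
apply: (no_tri hg hf) => x xG nx.
have : x \in <[a]> * <[b]> by rewrite -hGp.
move: nx => /[swap] /mulsgP[u v /cycleP[i ->] /cycleP[j ->] ->].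
rewrite -(expg_mod j hb).
have : j %% 2 < 2 by rewrite ltn_pmod.
case: (j %% 2) => [|[|//]] _.
  by rewrite expg0 mulg1 morphX // fa expg1n eqxx.
move=> _; rewrite expg1 expgS expg1 -!mulgA.
have -> : b * (a ^+ i * b) = (a ^+ i) ^ b by rewrite conjgE binv.
by rewrite conjXg hab expgVn mulgV.
Qed.

Lemma conj_comm (gT : finGroupType) (x y : gT) : commute x y -> x ^ y = x.
Proof. by move=> h; rewrite conjgE h mulKg. Qed.

Lemma norm_cyc (gT : finGroupType) (a b : gT) : a ^ b = a \/ a ^ b = a^-1 -> <[b]> \subset 'N(<[a]>).
Proof. by move=> h; rewrite cycle_subG inE -cycleJ; case: h => ->; rewrite ?cycleV subxx. Qed.

Lemma part1b (p g : nat) (gT : finGroupType) (G : {group gT}) :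
  prime p -> 3 <= p -> 2 <= g ->
  (G \isog Grp (a : b : c : (a ^+ p, b ^+ p, c ^+ 2,
                                   a ^ c = a^-1, b ^ c = b^-1, [~ a, b] = 1)))%g ->
  ~ acts_triangularly G g.
Proof.
move=> hp hp3 hg iso.
have : [set: 'I_2] \homg G.
  rewrite iso; apply/existsP; exists (1, 1, Zp1); rewrite /= !xpair_eqE /=.
  rewrite !cycle1 !joing1G !expg1n ?conj1g ?invg1 ?comm1g !eqxx !andbT.
  by rewrite eqEcard subsetT cardsT card_ord -orderE order_Zp1.
case/homgP => f hf.
move: (isoGrp_hom iso) => /existsP[[[a b] c]] /=; rewrite !xpair_eqE /=.
move=> /and5P[/eqP hG /eqP ha /eqP hb /eqP hc]. move=> /andP[/eqP hac /andP[/eqP hbc /eqP hab]].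
have hcab : commute a b by apply/commgP; rewrite hab.
have NG : <[a]> <*> <[b]> \subset G by rewrite -hG joing_subl.
have aG : a \in G by rewrite (subsetP NG) // (subsetP (joing_subl _ _)) ?cycle_id.
have bG : b \in G by rewrite (subsetP NG) // (subsetP (joing_subr _ _)) ?cycle_id.
have cop : coprime p 2 by rewrite coprimen2 odd_p.
have fa : f a = 1.
  apply: (triv_coprime (m := p) (n := 2)); first by rewrite -morphX // ha morph1.
    exact: Z2_homG_aux.
  done.
have fb : f b = 1.
  apply: (triv_coprime (m := p) (n := 2)); first by rewrite -morphX // hb morph1.
    exact: Z2_homG_aux.
  done.
have hN : <[a]> <*> <[b]> = <[a]> * <[b]> :> {set gT}.
  by rewrite norm_joinEr // norm_cyc // conj_comm //; left.
have hn : <[c]> \subset 'N(<[a]> <*> <[b]>).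
  by apply: normsY; apply: norm_cyc; right.
have hGp : G = (<[a]> <*> <[b]>) * <[c]> :> {set gT}.
  by rewrite -hG (norm_joinEr hn).
have cinv : c^-1 = c by apply/eqP; rewrite eq_invg_mul -expg2 hc.
apply: (no_tri hg hf) => x xG nx.
have : x \in (<[a]> <*> <[b]>) * <[c]> by rewrite -hGp.
move: nx => /[swap] /mulsgP[n v nN /cycleP[j ->] ->].
move: nN; rewrite hN => /mulsgP[u w /cycleP[i ->] /cycleP[k ->] ->].
rewrite -(expg_mod j hc).
have : j %% 2 < 2 by rewrite ltn_pmod.
case: (j %% 2) => [|[|//]] _.
  by rewrite expg0 mulg1 morphM ?groupX // !morphX // fa fb !expg1n mulg1 eqxx.
move=> _; rewrite expg1 expgS expg1 -!mulgA.
have -> : c * (a ^+ i * (b ^+ k * c)) = (a ^+ i * b ^+ k) ^ c by rewrite conjgE cinv !mulgA.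
rewrite conjMg !conjXg hac hbc !expVgn -invgM.
by rewrite (commuteX2 k i (esym hcab)) mulgA mulgV.
Qed.

Lemma cardTZp p : 1 < p -> #|[set: 'Z_p]| = p.
Proof. by move=> hp; rewrite cardsT card_ord Zp_cast. Qed.

Lemma Zp1_exp p : 1 < p -> (Zp1 : 'Z_p) ^+ p = 1.
Proof. by move=> hp; apply/eqP; rewrite -order_dvdn order_Zp1 Zp_cast. Qed.

Lemma Zp1_gen p : 1 < p -> <[Zp1 : 'Z_p]> = [set: 'Z_p].
Proof.
move=> hp; apply/eqP; rewrite eqEcard subsetT cardsT card_ord -orderE. by have -> := @order_Zp1 (Zp_trunc p).+1; rewrite ltnSn.
Qed.

Lemma Zp_morph_exp p (gT : finGroupType) (G : {group gT}) (f : {morphism G >-> 'Z_p}) x :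
  1 < p -> f x ^+ p = 1.
Proof. by move=> hp; have := expg_cardG (in_setT (f x)); rewrite cardTZp. Qed.

Lemma two_one (gT : finGroupType) (u v w : gT) : u * v * w = 1 ->
  [\/ u = 1 /\ v = 1, u = 1 /\ w = 1 | v = 1 /\ w = 1] -> [/\ u = 1, v = 1 & w = 1].
Proof.
move=> h [][e1 e2]; subst; rewrite ?mul1g ?mulg1 in h; subst; split => //.
Qed.

Lemma triv_join3 (gT rT : finGroupType) (G : {group gT}) (f : {morphism G >-> rT}) a b c :
  <[a]> <*> <[b]> <*> <[c]> = G -> a \in G -> b \in G -> c \in G ->
  f a = 1 -> f b = 1 -> f c = 1 -> f @* G = 1.
Proof.
move=> hG aG bG cG fa fb fc; apply/trivgP.
suff: <[a]> <*> <[b]> <*> <[c]> \subset 'ker f by rewrite hG ker_trivg_morphim => /andP[].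
by rewrite !join_subG !cycle_subG; apply/andP; split; [apply/andP; split|]; apply/kerP.
Qed.

Lemma ordp (gT : finGroupType) (y : gT) p : prime p -> y ^+ p = 1 -> 2 <= #[y] -> #[y] = p.
Proof.
move=> hp h hm; have ne : #[y] != 1%N by rewrite neq_ltn hm orbT.
by apply/(prime_nt_dvdP hp ne); rewrite order_dvdn h.
Qed.

Lemma ord2p (gT : finGroupType) (y : gT) p : prime p -> y ^+ (2 * p) = 1 -> 2 %| #[y] ->
  #[y] = 2 \/ #[y] = (2 * p)%N.
Proof.
move=> hp h /dvdnP[t ht]; move/eqP: h; rewrite -order_dvdn ht mulnC dvdn_pmul2l // => H.
case: (eqVneq t 1%N) => [->|ne]; first by left.
by right; rewrite (prime_nt_dvdP hp ne H).
Qed.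

Lemma ord_even (gT : finGroupType) (G : {group gT}) (f : {morphism G >-> 'I_2}) y :
  y \in G -> f y != 1 -> 2 %| #[y].
Proof.
move=> yG ny; apply: dvdn_trans (morph_order f yG).
have h2 : #[f y] %| 2 by rewrite order_dvdn Z2_homG_aux.
have ne : #[f y] != 1%N by rewrite order_eq1.
by rewrite (prime_nt_dvdP _ ne h2).
Qed.

Lemma concl3 p a b c : 3 <= p -> a = p -> (b = 2 \/ b = (2 * p)%N) -> (c = 2 \/ c = (2 * p)%N) ->
  ~ (b = 2 /\ c = 2) ->
  perm_eq [:: a; b; c] [:: (2 * p)%N; (2 * p)%N; p] \/ perm_eq [:: a; b; c] [:: 2; p; (2 * p)%N].
Proof.
move=> hp -> [->|->] [->|->] // H; try by case: H.
- by right; apply/seq.permP => P /=; lia.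
- by right; apply/seq.permP => P /=; lia.
- by left; apply/seq.permP => P /=; lia.
Qed.

Lemma perm213 (a b c : nat) : perm_eq [:: a; b; c] [:: b; a; c].
Proof. by apply/seq.permP => P /=; lia. Qed.

Lemma perm312 (a b c : nat) : perm_eq [:: a; b; c] [:: c; a; b].
Proof. by apply/seq.permP => P /=; lia. Qed.

Lemma dih_inv (gT : finGroupType) (a b : gT) i : b ^+ 2 = 1 -> a ^ b = a^-1 -> (a ^+ i * b) ^+ 2 = 1.
Proof.
move=> hb hab; have binv : b^-1 = b by apply/eqP; rewrite eq_invg_mul -expg2 hb.
rewrite expgS expg1 -!mulgA.
have -> : b * (a ^+ i * b) = (a ^+ i) ^ b by rewrite conjgE binv.
by rewrite conjXg hab expVgn mulgV.
Qed.

Lemma psi_contra p (gT : finGroupType) (G : {group gT}) (psi : {morphism G >-> 'Z_p}) y1 y2 y3 :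
  1 < p -> odd p -> psi @* G = setT -> y1 \in G -> y2 \in G -> y3 \in G ->
  <<[set y1; y2; y3]>> = G -> y1 * y2 * y3 = 1 ->
  [\/ y1 ^+ 2 = 1 /\ y2 ^+ 2 = 1, y1 ^+ 2 = 1 /\ y3 ^+ 2 = 1 | y2 ^+ 2 = 1 /\ y3 ^+ 2 = 1] -> False.
Proof.
move=> hp op hf h1 h2 h3 hG hpr H.
have sq : forall y, y \in G -> y ^+ 2 = 1 -> psi y = 1.
  move=> y yG e; apply: (triv_coprime (m := 2) (n := p)).
  - by rewrite -morphX // e morph1.
  - exact: Zp_morph_exp.
  - by rewrite coprime2n.
have hm : psi y1 * psi y2 * psi y3 = 1 by rewrite -!morphM ?groupM // hpr morph1.
have [e1 e2 e3] : [/\ psi y1 = 1, psi y2 = 1 & psi y3 = 1].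
  have T := two_one hm; apply: T; case: H => [][??]; [constructor 1|constructor 2|constructor 3]; split; apply: sq => //.
have := morph_gen_triv h1 h2 h3 hG e1 e2 e3; rewrite hf => e.
move: (congr1 (fun A : {set 'Z_p} => #|A|) e); rewrite /= cardTZp // cards1 => ep.
by rewrite ep in hp.
Qed.

Lemma part3 (p g : nat) (gT : finGroupType) (G : {group gT}) (m1 m2 m3 : nat) :
  prime p -> 3 <= p ->
  (G \isog Grp (a : b : c : (a ^+ p, b ^+ 2, c ^+ p, a ^ b = a^-1,
                                   [~ a, c] = 1, [~ b, c] = 1)))%g ->
  triangular_sig G g m1 m2 m3 ->
  perm_eq [:: m1; m2; m3] [:: (2 * p)%N; (2 * p)%N; p] \/
  perm_eq [:: m1; m2; m3] [:: 2; p; (2 * p)%N].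
Proof.
move=> hp hp3 iso.
have hp1 : 1 < p by apply: prime_gt1.
have op : odd p by apply: odd_p.
have : [set: 'I_2] \homg G.
  rewrite iso; apply/existsP; exists (1, Zp1, 1); rewrite /= !xpair_eqE /=.
  rewrite !cycle1 joing1G joingG1 !expg1n ?conj1g ?invg1 ?comm1g ?commg1 !eqxx !andbT.
  by rewrite eqEcard subsetT cardsT card_ord -orderE order_Zp1.
case/homgP => f hf.
have : [set: 'Z_p] \homg G.
  rewrite iso; apply/existsP; exists (1, 1, Zp1); rewrite /= !xpair_eqE /=.
  rewrite !cycle1 !joing1G !expg1n Zp1_exp // ?conj1g ?invg1 ?comm1g ?commg1 !eqxx !andbT.
  by rewrite eqEcard subsetT cardsT card_ord -orderE; have -> := @order_Zp1 (Zp_trunc p).+1; rewrite ltnSn.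
case/homgP => psi hpsi.
move: (isoGrp_hom iso) => /existsP[[[a b] c]] /=; rewrite !xpair_eqE /=.
move=> /and5P[/eqP hG /eqP ha /eqP hb /eqP hc]. move=> /andP[/eqP hab /andP[/eqP hac /eqP hbc]].
have hcac : commute a c by apply/commgP; rewrite hac.
have hcbc : commute b c by apply/commgP; rewrite hbc.
have NG : <[a]> <*> <[b]> \subset G by rewrite -hG joing_subl.
have aG : a \in G by rewrite (subsetP NG) // (subsetP (joing_subl _ _)) ?cycle_id.
have bG : b \in G by rewrite (subsetP NG) // (subsetP (joing_subr _ _)) ?cycle_id.
have cG : c \in G by rewrite -hG (subsetP (joing_subr _ _)) ?cycle_id.
have cop : coprime p 2 by rewrite coprimen2.
have fa : f a = 1.
  apply: (triv_coprime (m := p) (n := 2)); first by rewrite -morphX // ha morph1.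
    exact: Z2_homG_aux.
  done.
have fc : f c = 1.
  apply: (triv_coprime (m := p) (n := 2)); first by rewrite -morphX // hc morph1.
    exact: Z2_homG_aux.
  done.
have fb : f b != 1.
  apply/eqP => fb; have := triv_join3 hG aG bG cG fa fb fc; rewrite hf => e.
  by move: (congr1 (fun A : {set 'I_2} => #|A|) e); rewrite /= cardT2 cards1.
have hD : <[a]> <*> <[b]> = <[a]> * <[b]> :> {set gT}.
  by rewrite norm_joinEr // norm_cyc //; right.
have hn : <[c]> \subset 'N(<[a]> <*> <[b]>).
  by apply: normsY; apply: norm_cyc; left; apply: conj_comm.
have hGp : G = (<[a]> <*> <[b]>) * <[c]> :> {set gT}.
  by rewrite -hG (norm_joinEr hn).
have dec : forall x, x \in G -> exists i k (j : bool), x = a ^+ i * b ^+ j * c ^+ k.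
  move=> x xG; have : x \in (<[a]> <*> <[b]>) * <[c]> by rewrite -hGp.
  case/mulsgP => n v nN /cycleP[k ->] ->.
  move: nN; rewrite hD => /mulsgP[u w /cycleP[i ->] /cycleP[j ->] ->].
  exists i, k, (odd j); rewrite -(expg_mod j hb) modn2 //.
have Fin : forall x, x \in G -> f x = 1 -> x ^+ p = 1.
  move=> x xG; case: (dec x xG) => i [k [[|] ->]].
    rewrite expg1 !morphM ?groupM ?groupX // !morphX // fa fc !expg1n mul1g mulg1 => e.
    by rewrite e eqxx in fb.
  rewrite expg0 mulg1 => _; rewrite expgMn; last by apply: commuteX2.
  by rewrite -!expgM (mulnC i) (mulnC k) !expgM ha hc !expg1n mulg1.
have Fout : forall x, x \in G -> x ^+ (2 * p) = 1.
  move=> x xG; case: (dec x xG) => i [k [[|] ex]].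
    rewrite ex expg1 expgM (expgMn 2 (_ : commute (a ^+ i * b) (c ^+ k))); last first.
      apply: commuteX; apply: commute_sym; apply: commuteM; [apply: commuteX|]; exact: commute_sym.
    by rewrite dih_inv // mul1g -!expgM mulnA mulnC expgM hc expg1n.
  have xK : f x = 1.
    by rewrite ex expg0 mulg1 !morphM ?groupX // !morphX // fa fc !expg1n mulg1.
  by rewrite mulnC expgM Fin // expg1n.
case=> [[hm1 hm2 hm3] [y1 [y2 [y3 [[h1 h2 h3] hgen hprod [o1 o2 o3 _]]]]]].
have hG3 : <<[set y1; y2; y3]>> = G by [].
have oK : forall y m, y \in G -> f y = 1 -> #[y] = m -> 2 <= m -> m = p.
  by move=> y m yG fy <- hm; apply: ordp => //; apply: Fin.
have oO : forall y m, y \in G -> f y != 1 -> #[y] = m -> m = 2 \/ m = (2 * p)%N.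
  by move=> y m yG fy <-; apply: ord2p => //; [apply: Fout | apply: ord_even fy].
have sq : forall y : gT, #[y] = 2 -> y ^+ 2 = 1 by move=> y <-; apply: expg_order.
case: (z2_three hf h1 h2 h3 hG3 hprod) => [][n1 n2 n3].
- apply: concl3 => //; first by apply: (oK y1) => //; apply/eqP.
  + exact: (oO y2).
  + exact: (oO y3).
  move=> [e2 e3]; apply: (psi_contra hp1 op hpsi h1 h2 h3 hG3 hprod).
  by constructor 3; split; apply: sq; rewrite ?o2 ?o3.
- have P := perm213 m1 m2 m3.
  rewrite !(seq.permPl P); apply: concl3 => //; first by apply: (oK y2) => //; apply/eqP.
  + exact: (oO y1).
  + exact: (oO y3).
  move=> [e2 e3]; apply: (psi_contra hp1 op hpsi h1 h2 h3 hG3 hprod).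
  by constructor 2; split; apply: sq; rewrite ?o1 ?o3.
- have P := perm312 m1 m2 m3.
  rewrite !(seq.permPl P); apply: concl3 => //; first by apply: (oK y3) => //; apply/eqP.
  + exact: (oO y1).
  + exact: (oO y2).
  move=> [e2 e3]; apply: (psi_contra hp1 op hpsi h1 h2 h3 hG3 hprod).
  by constructor 1; split; apply: sq; rewrite ?o1 ?o2.
Qed.

Lemma pairX (g1 g2 : finGroupType) (x : (g1 * g2)%type) n : x ^+ n = (x.1 ^+ n, x.2 ^+ n).
Proof. elim: n => [|n IH]; first by []. by rewrite !expgS IH. Qed.

Lemma cardTZp2 p : 1 < p -> #|[set: ('Z_p * 'Z_p)%type]| = (p * p)%N.
Proof. by move=> hp; rewrite cardsT card_prod card_ord Zp_cast. Qed.

Lemma Zp2_exp p (u : ('Z_p * 'Z_p)%type) : 1 < p -> u ^+ p = 1.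
Proof.
move=> hp; rewrite pairX.
have E : forall v : 'Z_p, v ^+ p = 1.
  by move=> v; have := expg_cardG (in_setT v); rewrite cardTZp.
by rewrite !E.
Qed.

Lemma Zp2_gen p : 1 < p ->
  [set: ('Z_p * 'Z_p)%type] \subset <[(Zp1 : 'Z_p, 1 : 'Z_p)]> <*> <[(1 : 'Z_p, Zp1 : 'Z_p)]>.
Proof.
move=> hp.
have e1 : setX <[Zp1 : 'Z_p]> 1 = <[(Zp1 : 'Z_p, 1 : 'Z_p)]>.
  by rewrite -morphim_pairg1 morphim_cycle ?inE.
have e2 : setX 1 <[Zp1 : 'Z_p]> = <[(1 : 'Z_p, Zp1 : 'Z_p)]>.
  by rewrite -morphim_pair1g morphim_cycle ?inE.
have -> : [set: ('Z_p * 'Z_p)%type] = setX <[Zp1 : 'Z_p]> 1 * setX 1 <[Zp1 : 'Z_p]>.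
  by rewrite setX_prod Zp1_gen //; apply/setP => -[x y]; rewrite !inE.
by rewrite e1 e2; apply: mul_subG; [apply: joing_subl | apply: joing_subr].
Qed.

Lemma sq_gt p : 1 < p -> p < p * p.
Proof. by move=> h; nia. Qed.

Lemma inv_cyc (rT : finGroupType) (u v : rT) : u * v = 1 -> v \in <[u]>.
Proof. move=> h; have <- : u^-1 = v by apply/eqP; rewrite eq_invg_mul h. by rewrite groupV cycle_id. Qed.

Lemma phi_contra p (gT : finGroupType) (G : {group gT}) (phi : {morphism G >-> ('Z_p * 'Z_p)%type}) y1 y2 y3 :
  1 < p -> odd p -> phi @* G = setT -> y1 \in G -> y2 \in G -> y3 \in G ->
  <<[set y1; y2; y3]>> = G -> y1 * y2 * y3 = 1 ->
  [\/ y1 ^+ 2 = 1, y2 ^+ 2 = 1 | y3 ^+ 2 = 1] -> False.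
Proof.
move=> hp op hf h1 h2 h3 hG hpr H.
have sq : forall y, y \in G -> y ^+ 2 = 1 -> phi y = 1.
  move=> y yG e; apply: (triv_coprime (m := 2) (n := (p * p)%N)).
  - by rewrite -morphX // e morph1.
  - by have := expg_cardG (in_setT (phi y)); rewrite cardTZp2.
  - by rewrite coprime2n oddM op.
have hm : phi y1 * phi y2 * phi y3 = 1 by rewrite -!morphM ?groupM // hpr morph1.
have [t [t1 t2 t3]] : exists t, [/\ phi y1 \in <[t]>, phi y2 \in <[t]> & phi y3 \in <[t]>].
  case: H => e.
  - exists (phi y2); rewrite (sq _ h1 e) group1 cycle_id; split => //.
    by apply: inv_cyc; move: hm; rewrite (sq _ h1 e) mul1g.
  - exists (phi y1); rewrite (sq _ h2 e) group1 cycle_id; split => //.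
    by apply: inv_cyc; move: hm; rewrite (sq _ h2 e) mulg1.
  - exists (phi y1); rewrite (sq _ h3 e) group1 cycle_id; split => //.
    by apply: inv_cyc; move: hm; rewrite (sq _ h3 e) mulg1.
have : phi @* <<[set y1; y2; y3]>> \subset <[t]>.
  rewrite morphim_gen ?sub3 // gen_subG; apply/subsetP => x /morphimP[y yG yS ->]; move: yS.
  by rewrite !inE => /orP[/orP[]|]/eqP->.
rewrite hG hf => /subset_leq_card; rewrite cardTZp2 // -orderE => hle.
have hle2 : #[t] <= p by apply: dvdn_leq; [exact: ltnW hp | rewrite order_dvdn Zp2_exp].
have := leq_trans hle hle2.
by rewrite leqNgt (sq_gt hp).
Qed.

Lemma pairM (g1 g2 : finGroupType) (x y : (g1 * g2)%type) : x * y = (x.1 * y.1, x.2 * y.2).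
Proof. by []. Qed.

Lemma concl2 p a b c : a = p -> b = (2 * p)%N -> c = (2 * p)%N ->
  perm_eq [:: a; b; c] [:: (2 * p)%N; (2 * p)%N; p].
Proof. by move=> -> -> ->; apply/seq.permP => P /=; lia. Qed.

Lemma part2 (p g : nat) (gT : finGroupType) (G : {group gT}) (m1 m2 m3 : nat) :
  prime p -> 3 <= p ->
  (G \isog Grp (a : b : (a ^+ (2 * p), b ^+ p, [~ a, b] = 1)))%g ->
  triangular_sig G g m1 m2 m3 ->
  perm_eq [:: m1; m2; m3] [:: (2 * p)%N; (2 * p)%N; p].
Proof.
move=> hp hp3 iso.
have hp1 : 1 < p by apply: prime_gt1.
have op : odd p by apply: odd_p.
have : [set: 'I_2] \homg G.
  rewrite iso; apply/existsP; exists (Zp1, 1); rewrite /= !xpair_eqE /=.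
  rewrite cycle1 joingG1; apply/and4P; split.
  - by rewrite eqEcard subsetT cardsT card_ord -orderE order_Zp1.
  - by rewrite -order_dvdn (@order_Zp1 1) dvdn_mulr.
  - by apply/eqP; apply: expg1n.
  - by apply/eqP; apply: commg1.
case/homgP => f hf.
have : [set: ('Z_p * 'Z_p)%type] \homg G.
  rewrite iso; apply/existsP; exists ((Zp1 : 'Z_p, 1 : 'Z_p), (1 : 'Z_p, Zp1 : 'Z_p)).
  rewrite /= !xpair_eqE /=; apply/and4P; split.
  - by rewrite eqEsubset subsetT Zp2_gen.
  - by apply/eqP; rewrite pairX /= expg1n mulnC expgM Zp1_exp // expg1n.
  - by apply/eqP; rewrite pairX /= expg1n Zp1_exp.
  - by rewrite !invg1 !mul1g !mulg1 !mulVg eqxx.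
case/homgP => phi hphi.
move: (isoGrp_hom iso) => /existsP[[a b]] /=; rewrite !xpair_eqE /=.
move=> /and4P[/eqP hG /eqP ha /eqP hb /eqP hab].
have hcab : commute a b by apply/commgP; rewrite hab.
have aG : a \in G by rewrite -hG (subsetP (joing_subl _ _)) ?cycle_id.
have bG : b \in G by rewrite -hG (subsetP (joing_subr _ _)) ?cycle_id.
have cop : coprime p 2 by rewrite coprimen2.
have fb : f b = 1.
  apply: (triv_coprime (m := p) (n := 2)); first by rewrite -morphX // hb morph1.
    exact: Z2_homG_aux.
  done.
have fa : f a != 1.
  apply/eqP => fa.
  have hG' : <[a]> <*> <[b]> <*> <[1]> = G by rewrite cycle1 joingG1.
  have := triv_join3 hG' aG bG (group1 _) fa fb (morph1 f); rewrite hf => e.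
  by move: (congr1 (fun A : {set 'I_2} => #|A|) e); rewrite /= cardT2 cards1.
have hGp : G = <[a]> * <[b]> :> {set gT}.
  by rewrite -hG norm_joinEr // norm_cyc //; left; apply: conj_comm; apply: commute_sym.
have dec : forall x, x \in G -> exists i k, x = a ^+ i * b ^+ k.
  move=> x xG; have : x \in <[a]> * <[b]> by rewrite -hGp.
  by case/mulsgP => u v /cycleP[i ->] /cycleP[k ->] ->; exists i, k.
have Fout : forall x, x \in G -> x ^+ (2 * p) = 1.
  move=> x xG; case: (dec x xG) => i [k ->].
  rewrite expgMn; last by apply: commuteX2.
  rewrite -!expgM (mulnC i) expgM ha expg1n mul1g.
  by rewrite mulnA mulnC expgM hb expg1n.
have Fin : forall x, x \in G -> f x = 1 -> x ^+ p = 1.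
  move=> x xG; case: (dec x xG) => i [k ->].
  rewrite morphM ?groupX // !morphX // fb expg1n mulg1.
  rewrite -(expg_mod i (Z2_homG_aux f aG)) modn2.
  case oi : (odd i); first by rewrite expg1 => e; rewrite e eqxx in fa.
  move=> _.
  rewrite expgMn; last by apply: commuteX2.
  rewrite -!expgM (mulnC k) (expgM b) hb expg1n mulg1.
  apply/eqP; rewrite -order_dvdn; apply: dvdn_trans (_ : (2 * p %| i * p)%N).
    by rewrite order_dvdn ha.
  by rewrite dvdn_mul // dvdn2 oi.
case=> [[hm1 hm2 hm3] [y1 [y2 [y3 [[h1 h2 h3] hgen hprod [o1 o2 o3 _]]]]]].
have hG3 : <<[set y1; y2; y3]>> = G by [].
have oK : forall y m, y \in G -> f y = 1 -> #[y] = m -> 2 <= m -> m = p.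
  by move=> y m yG fy <- hm; apply: ordp => //; apply: Fin.
have sq : forall y : gT, #[y] = 2 -> y ^+ 2 = 1 by move=> y <-; apply: expg_order.
have oO : forall y m, y \in G -> f y != 1 -> #[y] = m ->
    (y ^+ 2 = 1 -> False) -> m = (2 * p)%N.
  move=> y m yG fy <- nsq.
  case: (ord2p hp (Fout y yG) (ord_even yG fy)) => // e.
  by case: nsq; apply: sq.
have C := phi_contra hp1 op hphi h1 h2 h3 hG3 hprod.
case: (z2_three hf h1 h2 h3 hG3 hprod) => [][n1 n2 n3].
- apply: concl2; first by apply: (oK y1) => //; apply/eqP.
  + by apply: (oO y2) => // e; apply: C; constructor 2.
  + by apply: (oO y3) => // e; apply: C; constructor 3.
- rewrite (seq.permPl (perm213 m1 m2 m3)).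
  apply: concl2; first by apply: (oK y2) => //; apply/eqP.
  + by apply: (oO y1) => // e; apply: C; constructor 1.
  + by apply: (oO y3) => // e; apply: C; constructor 3.
- rewrite (seq.permPl (perm312 m1 m2 m3)).
  apply: concl2; first by apply: (oK y3) => //; apply/eqP.
  + by apply: (oO y1) => // e; apply: C; constructor 1.
  + by apply: (oO y2) => // e; apply: C; constructor 2.
Qed.


Lemma part4 (p g : nat) (gT : finGroupType) (G : {group gT}) (m1 m2 m3 : nat) :
  prime p -> 3 <= p -> cyclic G -> #|G| = (2 * p ^ 2)%N ->
  triangular_sig G g m1 m2 m3 ->
  [\/ perm_eq [:: m1; m2; m3] [:: 2; (p ^ 2)%N; (2 * p ^ 2)%N],
      perm_eq [:: m1; m2; m3] [:: (2 * p ^ 2)%N; (2 * p ^ 2)%N; p],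
      perm_eq [:: m1; m2; m3] [:: (2 * p ^ 2)%N; (2 * p ^ 2)%N; (p ^ 2)%N] |
      perm_eq [:: m1; m2; m3] [:: (2 * p)%N; (p ^ 2)%N; (2 * p ^ 2)%N]].
Proof.
move=> hp hp3 /cyclicP[z hz] hcard.
have p0 : 0 < p by apply: prime_gt0.
have oz : #[z] = (2 * p ^ 2)%N by rewrite orderE -hz hcard.
case=> [[hm1 hm2 hm3] [y1 [y2 [y3 [[h1 h2 h3] hgen hprod [o1 o2 o3 _]]]]]].
have hgen' : <<[set y1; y2; y3]>> = G :> {set gT} by [].
move: h1 h2 h3; rewrite hz => /cycleP[k1 e1] /cycleP[k2 e2] /cycleP[k3 e3].
subst y1 y2 y3.
have hA : forall k, (#[z ^+ k] %| p ^ 2) = ~~ odd k.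
  move=> k; rewrite order_dvdn -expgM -order_dvdn oz dvdn_pmul2r ?expn_gt0 ?p0 //.
  by rewrite dvdn2.
have hB : forall k, (#[z ^+ k] %| 2 * p) = (p %| k).
  move=> k; rewrite order_dvdn -expgM -order_dvdn oz N_eq dvdn_pmul2r //.
  by rewrite muln_gt0 p0.
have hD : forall k, #[z ^+ k] %| 2 * p ^ 2 by move=> k; rewrite -oz orderXdvd.
have c1 := cls (e := odd k1) (q := p %| k1) hp hp3 (leq_trans hm1 (eq_leq (esym o1))) (hD k1) (hA k1) (hB k1).
have c2 := cls (e := odd k2) (q := p %| k2) hp hp3 (leq_trans hm2 (eq_leq (esym o2))) (hD k2) (hA k2) (hB k2).
have c3 := cls (e := odd k3) (q := p %| k3) hp hp3 (leq_trans hm3 (eq_leq (esym o3))) (hD k3) (hA k3) (hB k3).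
rewrite -o1 -o2 -o3.
have hs : (2 * p ^ 2 %| k1 + k2 + k3)%N by rewrite -oz order_dvdn !expgD hprod.
have hpar : ~~ (odd k1 (+) odd k2 (+) odd k3).
  by rewrite -!oddD -dvdn2 (dvdn_trans (dvdn_mulr _ (dvdnn 2)) hs).
have hps : p %| k1 + k2 + k3 by rewrite (dvdn_trans _ hs) // dvdn_mull // dvdn_exp.
have notall : forall d, 1 < d -> d %| 2 * p ^ 2 -> d %| k1 -> d %| k2 -> d %| k3 -> False.
  move=> d hd1 hdN d1 d2 d3.
  have sub : <<[set z ^+ k1; z ^+ k2; z ^+ k3]>> \subset <[z ^+ d]>.
    rewrite gen_subG; apply/subsetP => x; rewrite !inE => /orP[/orP[]|]/eqP->.
    - by rewrite -(divnK d1) mulnC expgM mem_cycle.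
    - by rewrite -(divnK d2) mulnC expgM mem_cycle.
    - by rewrite -(divnK d3) mulnC expgM mem_cycle.
  have := subset_leq_card sub; rewrite hgen' hcard -orderE orderXgcd oz (gcdn_idPr hdN).
  by rewrite leqNgt ltn_Pdiv // muln_gt0 expn_gt0 p0.
have ne : ~~ [&& ~~ odd k1, ~~ odd k2 & ~~ odd k3].
  by apply/negP => /and3P[]; rewrite -!dvdn2 => a b c; apply: (notall 2) => //; rewrite dvdn_mulr.
have hp1 : 1 < p by apply: prime_gt1.
have hpN : p %| 2 * p ^ 2 by rewrite dvdn_mull // dvdn_exp.
have q12 : ~~ ((p %| k1) && (p %| k2)).
  apply/negP => /andP[a b]; apply: (notall p) => //.
  by rewrite -(dvdn_addr _ (dvdn_add a b)).
have q13 : ~~ ((p %| k1) && (p %| k3)).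
  apply/negP => /andP[a b]; apply: (notall p) => //.
  by rewrite -(dvdn_addl _ b) -(dvdn_addr _ a) addnA.
have q23 : ~~ ((p %| k2) && (p %| k3)).
  apply/negP => /andP[a b]; apply: (notall p) => //.
  by rewrite -(dvdn_addl _ (dvdn_add a b)) addnA.
move: c1 c2 c3 hpar ne; case: (odd k1); case: (odd k2); case: (odd k3) => //= c1 c2 c3 _ _.
- exact: core4 c1 c2 c3 q12 q13 q23.
- rewrite !(seq.permPl (perm132 #[z ^+ k1] #[z ^+ k2] #[z ^+ k3])).
  by apply: core4 c1 c3 c2 q13 q12 _; rewrite andbC.
- rewrite !(seq.permPl (perm231 #[z ^+ k1] #[z ^+ k2] #[z ^+ k3])).
  by apply: core4 c2 c3 c1 q23 _ _; rewrite andbC.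
Qed.

Local Close Scope group_scope.

Theorem lemma1 (p g : nat) (hp : prime p) (hp3 : 3 <= p) (hg : 2 <= g) :
  [/\
   (* (1) *)
   (forall (gT : finGroupType) (G : {group gT}),
       (G \isog Grp (a : b : (a ^+ (p ^ 2), b ^+ 2, a ^ b = a^-1)))%g ->
       ~ acts_triangularly G g) /\
   (forall (gT : finGroupType) (G : {group gT}),
       (G \isog Grp (a : b : c : (a ^+ p, b ^+ p, c ^+ 2,
                                   a ^ c = a^-1, b ^ c = b^-1, [~ a, b] = 1)))%g ->
       ~ acts_triangularly G g),
   (* (2) Z_{2p} x Z_p *)
   (forall (gT : finGroupType) (G : {group gT}) (m1 m2 m3 : nat),
       (G \isog Grp (a : b : (a ^+ (2 * p), b ^+ p, [~ a, b] = 1)))%g ->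
       triangular_sig G g m1 m2 m3 ->
       perm_eq [:: m1; m2; m3] [:: 2 * p; 2 * p; p]),
   (* (3) D_p x Z_p *)
   (forall (gT : finGroupType) (G : {group gT}) (m1 m2 m3 : nat),
       (G \isog Grp (a : b : c : (a ^+ p, b ^+ 2, c ^+ p, a ^ b = a^-1,
                                   [~ a, c] = 1, [~ b, c] = 1)))%g ->
       triangular_sig G g m1 m2 m3 ->
       perm_eq [:: m1; m2; m3] [:: 2 * p; 2 * p; p] \/
       perm_eq [:: m1; m2; m3] [:: 2; p; 2 * p]) &
   (* (4) Z_{2p^2} *)
   (forall (gT : finGroupType) (G : {group gT}) (m1 m2 m3 : nat),
       cyclic G -> #|G| = 2 * p ^ 2 ->
       triangular_sig G g m1 m2 m3 ->
       [\/ perm_eq [:: m1; m2; m3] [:: 2; p ^ 2; 2 * p ^ 2],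
           perm_eq [:: m1; m2; m3] [:: 2 * p ^ 2; 2 * p ^ 2; p],
           perm_eq [:: m1; m2; m3] [:: 2 * p ^ 2; 2 * p ^ 2; p ^ 2] |
           perm_eq [:: m1; m2; m3] [:: 2 * p; p ^ 2; 2 * p ^ 2]])].
Proof.
split.
- split => gT G iso; [exact: part1a hp hp3 hg iso | exact: part1b hp hp3 hg iso].
- by move=> gT G m1 m2 m3 iso; apply: part2 hp hp3 iso.
- by move=> gT G m1 m2 m3 iso; apply: part3 hp hp3 iso.
- by move=> gT G m1 m2 m3 cG card; apply: part4 hp hp3 cG card.
Qed.
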